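(* Let $z,a,b,c,n,m,p,q,r$ be positive integers and $$M=\begin{pmatrix} z & a & b\\ c & n & m\\ p & q & r\end{pmatrix}.$$ If $z\geq 1$, $n>ac$, $r>bp$, $m\geq bc$ and $q\geq ap$, then $\mathrm{Cat}(M)\neq\emptyset$.
   Context: For an $n\times n$ matrix $M=(m_{ij})$ with entries in the natural numbers, $\mathrm{Cat}(M)$ denotes the collection of categories $A$ with exactly $n$ distinct objects $x_1,\dots,x_n$ such that $|A(x_i,x_j)|=m_{ij}$ for all $i,j$, where $A(x_i,x_j)$ is the set of morphisms from $x_i$ to $x_j$. The paper considers matrices with strictly positive entries. *)

(* Defs.v *)
From mathcomp Require Import all_boot all_algebra.
Set Implicit Arguments. Unset Strict Implicit. Unset Printing Implicit Defensive.

(* A (small) category whose objects are exactly x_0, ..., x_{n-1}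
   (indexed by 'I_n, hence pairwise distinct), with finite hom-sets. *)
Record category (n : nat) := Category {
  hom : 'I_n -> 'I_n -> finType;
  idm : forall i, hom i i;
  comp : forall i j k, hom j k -> hom i j -> hom i k;
  comp_assoc : forall i j k l (h : hom k l) (g : hom j k) (f : hom i j),
      comp h (comp g f) = comp (comp h g) f;
  comp_idl : forall i j (f : hom i j), comp (idm j) f = f;
  comp_idr : forall i j (f : hom i j), comp f (idm i) = f
}.

Definition in_Cat (n : nat) (M : 'M[nat]_n) (C : category n) : Prop :=
  forall i j, #|hom C i j| = M i j.

Definition Cat_nonempty (n : nat) (M : 'M[nat]_n) : Prop :=
  exists C : category n, in_Cat M C.

Definition mx3 (z a b c n m p q r : nat) : 'M[nat]_3 :=
  \matrix_(i < 3, j < 3)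
    nth 0 (nth [::] [:: [:: z; a; b]; [:: c; n; m]; [:: p; q; r]] i) j.

(* Main.v *)
Require Import Defs.
From mathcomp Require Import all_boot all_algebra.
From mathcomp Require Import zify.
Set Implicit Arguments. Unset Strict Implicit.

Inductive code := CId | CPair of nat & nat | CExt of nat.

Section Constr.
Variables z a b c n m p q r : nat.
Hypotheses (hz : 0 < z) (ha : 0 < a) (hb : 0 < b) (hc : 0 < c) (hn0 : 0 < n)
  (hm0 : 0 < m) (hp : 0 < p) (hq0 : 0 < q) (hr0 : 0 < r)
  (hn : a * c < n) (hr : b * p < r) (hm : b * c <= m) (hq : a * p <= q).

Definition out i := match i with 0 => 1 | 1 => c | _ => p end.
Definition inn j := match j with 0 => 1 | 1 => a | _ => b end.
Definition Mf i j := match i, j with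
  | 0, 0 => z | 0, 1 => a | 0, _ => b
  | 1, 0 => c | 1, 1 => n | 1, _ => m
  | _, 0 => p | _, 1 => q | _, _ => r end.
Definition coll i j := [&& i == 0, j == 0 & z == 1].
Definition P i j := if coll i j then 0 else out i * inn j.

Lemma out_gt0 i : 0 < out i. Proof. by case: i => [|[|i]]. Qed.
Lemma inn_gt0 i : 0 < inn i. Proof. by case: i => [|[|i]]. Qed.
Lemma Mf_gt0 i j : 0 < Mf i j. Proof. by case: i => [|[|i]]; case: j => [|[|j]]. Qed.

Lemma K i j : (i == j) + P i j <= Mf i j.
Proof.
rewrite /P /coll; case: i => [|[|i]]; case: j => [|[|j]] /=;
  try case: eqP; try case: eqP; lia.
Qed.

Definition al u := match u with CPair x _ => x | _ => 0 end.
Definition be u := match u with CPair _ y => y | _ => 0 end.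
Definition pairc i k x y := if coll i k then CId else CPair x y.
Definition gmul i k v u :=
  match u with CId => v | _ => match v with CId => u | _ => pairc i k (al u) (be v) end end.
Definition valid i j u := match u with
  | CId => i == j
  | CPair x y => [&& x < out i, y < inn j & ~~ coll i j]
  | CExt t => (i == j) + P i j + t < Mf i j end.

Lemma valid_al i j u : valid i j u -> u <> CId -> al u < out i.
Proof. case: u => //= [x y /and3P[]//|t _ _]; exact: out_gt0. Qed.
Lemma valid_be i j u : valid i j u -> u <> CId -> be u < inn j.
Proof. case: u => //= [x y /and3P[]//|t _ _]; exact: inn_gt0. Qed.

Lemma gmul_valid i j k u v : valid i j u -> valid j k v -> valid i k (gmul i k v u).
Proof.
case: u => [|x y|t] Hu.
- by move: Hu => /= /eqP ->.
- case: v => [|x' y'|t'] Hv /=.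
  + by move: Hv => /= /eqP <-.
  + rewrite /pairc; case: ifP => /=.
      by rewrite /coll => /and3P[/eqP -> /eqP -> _].
    move=> ->; move: Hu Hv => /= /and3P[-> _ _] /and3P[_ -> _]; done.
  + rewrite /pairc; case: ifP => /=.
      by rewrite /coll => /and3P[/eqP -> /eqP -> _].
    move=> ->; move: Hu => /= /and3P[-> _ _]; rewrite inn_gt0; done.
- case: v => [|x' y'|t'] Hv /=.
  + by move: Hv => /= /eqP <-.
  + rewrite /pairc; case: ifP => /=.
      by rewrite /coll => /and3P[/eqP -> /eqP -> _].
    move=> ->; move: Hv => /= /and3P[_ -> _]; rewrite out_gt0; done.
  + rewrite /pairc; case: ifP => /=.
      by rewrite /coll => /and3P[/eqP -> /eqP -> _].
    by move=> ->; rewrite out_gt0 inn_gt0.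
Qed.

Lemma W0 l w : z = 1 -> valid 0 l w -> w <> CId -> l != 0 /\ w = CPair 0 (be w).
Proof.
move=> z1; case: w => //= [x y|t].
- case/and3P; rewrite /coll z1 /= andbT => ? _ Hl _; split=> //; congr CPair; lia.
- rewrite /P /coll z1; case: l => [|[|l]] /=; lia.
Qed.

Lemma W0' i u : z = 1 -> valid i 0 u -> u <> CId -> i != 0 /\ u = CPair (al u) 0.
Proof.
move=> z1; case: u => //= [x y|t].
- case/and3P; rewrite /coll z1 /= andbT => _ ? Hl _; split=> //; congr CPair; lia.
- rewrite /P /coll z1; case: i => [|[|i]] /=; lia.
Qed.

Lemma gmulId i l u : gmul i l CId u = u. Proof. by case: u. Qed.

Lemma gmul_nonid i k u v : u <> CId -> v <> CId -> gmul i k v u = pairc i k (al u) (be v).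
Proof. by case: u => // [x y|t] _; case: v. Qed.

Lemma gmul_assoc_nonid i j k l u v w : u <> CId -> v <> CId -> w <> CId ->
  valid i j u -> valid j k v -> valid k l w ->
  gmul i l w (gmul i k v u) = gmul i l (gmul j l w v) u.
Proof.
move=> nu nv nw Hu Hv Hw.
rewrite (gmul_nonid _ _ nu nv) (gmul_nonid _ _ nv nw) /pairc.
case: (boolP (coll i k)) => Hik; case: (boolP (coll j l)) => Hjl.
- move: Hik Hjl => /and3P[/eqP ? /eqP ? /eqP z1] /and3P[/eqP ? /eqP ? _]; subst.
  by have [] := W0 z1 Hw nw.
- move: Hik => /and3P[/eqP ? /eqP ? /eqP z1]; subst.
  have [Hl Hw'] := W0 z1 Hw nw.
  have -> : gmul 0 l w CId = w by [].
  rewrite gmul_nonid // /= /pairc /coll /= (negbTE Hl) /=.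
  have := valid_al Hu nu => /= Hx.
  rewrite {1}Hw'; congr CPair; lia.
- move: Hjl => /and3P[/eqP ? /eqP ? /eqP z1]; subst.
  have [Hi Hu'] := W0' z1 Hu nu.
  rewrite gmulId gmul_nonid // /= /pairc /coll /= (negbTE Hi) /=.
  have := valid_be Hw nw => /= Hy.
  rewrite {2}Hu'; congr CPair; lia.
- by rewrite !gmul_nonid.
Qed.

Lemma gmul_assoc i j k l u v w : valid i j u -> valid j k v -> valid k l w ->
  gmul i l w (gmul i k v u) = gmul i l (gmul j l w v) u.
Proof.
case: u => [|x y|t].
  by move=> /= /eqP ->.
all: case: v => [|x' y'|t'].
all: try by (move=> _ /= /eqP <- _; rewrite ?gmulId).
all: case: w => [|x'' y''|t''].
all: try by (rewrite {3}/valid => _ _ /eqP <-; rewrite !gmulId).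
all: by apply: gmul_assoc_nonid.
Qed.

Definition encode i j u := match u with
  | CId => 0
  | CPair x y => (i == j) + x * inn j + y
  | CExt t => (i == j) + P i j + t end.
Definition decode i j t :=
  if (i == j) && (t == 0) then CId
  else if t - (i == j) < P i j then CPair ((t - (i == j)) %/ inn j) ((t - (i == j)) %% inn j)
  else CExt (t - (i == j) - P i j).

Lemma encode_lt i j u : valid i j u -> encode i j u < Mf i j.
Proof.
have HK := K i j; have := Mf_gt0 i j.
case: u => [|x y|t] //= Hm.
case/and3P=> Hx Hy Hc; move: HK; rewrite /P (negbTE Hc).
have : x * inn j + y < out i * inn j.
  have : x * inn j + y < x.+1 * inn j by rewrite mulSn; lia.
  move=> h; apply: (leq_trans h); rewrite leq_mul2r; apply/orP; right; exact: Hx.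
lia.
Qed.

Lemma decodeK i j u : valid i j u -> decode i j (encode i j u) = u.
Proof.
rewrite /decode; case: u => [|x y|t] /=.
- by move/eqP => ->; rewrite eqxx.
- case/and3P=> Hx Hy Hc.
  have -> : (i == j) && ((i == j) + x * inn j + y == 0) = false by case: (i == j).
  have -> : (i == j) + x * inn j + y - (i == j) = x * inn j + y by lia.
  have Hlt : x * inn j + y < P i j.
    rewrite /P (negbTE Hc).
    have : x * inn j + y < x.+1 * inn j by rewrite mulSn; lia.
    move=> h; apply: (leq_trans h); rewrite leq_mul2r; apply/orP; right; exact: Hx.
  rewrite Hlt divnMDl ?inn_gt0 // modnMDl divn_small // modn_small //.
  by rewrite addn0.
- move=> Ht.
  have -> : (i == j) && ((i == j) + P i j + t == 0) = false by case: (i == j).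
  have -> : (i == j) + P i j + t - (i == j) < P i j = false by lia.
  by congr CExt; lia.
Qed.

Lemma encodeK i j t : t < Mf i j -> encode i j (decode i j t) = t.
Proof.
rewrite /decode; case: ifP => [/andP[_ /eqP ->] //|H0] Ht.
case: ifP => Hs /=.
  rewrite -addnA -divn_eq; move: H0; case: (i == j) => /=; lia.
move: H0 Hs; case: (i == j) => /=; lia.
Qed.

Lemma decode_valid i j t : t < Mf i j -> valid i j (decode i j t).
Proof.
rewrite /decode; case: ifP => [/andP[/eqP -> _] //=|H0] Ht.
case: ifP => Hs /=.
  have HP : P i j != 0 by apply/eqP => h; rewrite h in Hs.
  have Hc : ~~ coll i j by move: HP; rewrite /P; case: coll.
  rewrite Hc ltn_pmod ?inn_gt0 // andbT ltn_divLR ?inn_gt0 //.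
  by rewrite andbT; move: Hs; rewrite /P (negbTE Hc).
move: H0 Hs; case: (i == j) => /= H0 Hs.
  have ht : 0 < t by rewrite lt0n H0.
  lia.
lia.
Qed.

Lemma ltP1 x y : x < y -> x < y.-1.+1. Proof. by case: y. Qed.

Definition hom3 (i j : 'I_3) : finType := 'I_((Mf i j).-1.+1).
Lemma ltM (i j : 'I_3) (t : hom3 i j) : nat_of_ord t < Mf i j.
Proof. by have := ltn_ord t; move: (nat_of_ord t); rewrite prednK ?Mf_gt0. Qed.
Definition cidm (i : 'I_3) : hom3 i i := inord 0.
Definition ccomp (i j k : 'I_3) (v : hom3 j k) (u : hom3 i j) : hom3 i k :=
  inord (encode i k (gmul i k (decode j k v) (decode i j u))).
Lemma ccompE (i j k : 'I_3) v u : @ccomp i j k v u =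
  inord (encode i k (gmul i k (decode j k v) (decode i j u))).
Proof. by []. Qed.

Lemma dec_comp (i j k : 'I_3) v u : decode i k (nat_of_ord (@ccomp i j k v u)) =
   gmul i k (decode j k v) (decode i j u).
Proof.
have Hv := decode_valid (ltM v); have Hu := decode_valid (ltM u).
have Hg := gmul_valid Hu Hv.
rewrite /ccomp inordK ?decodeK //.
by apply: ltP1; apply: encode_lt.
Qed.

Lemma ccomp_assoc (i j k l : 'I_3) (h : hom3 k l) (g : hom3 j k) (f : hom3 i j) :
  ccomp h (ccomp g f) = ccomp (ccomp h g) f.
Proof.
rewrite [ccomp h (ccomp g f)]ccompE [ccomp (ccomp h g) f]ccompE !dec_comp.
by rewrite (gmul_assoc (decode_valid (ltM f)) (decode_valid (ltM g)) (decode_valid (ltM h))).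
Qed.

Lemma dec_id (i : 'I_3) : decode i i (nat_of_ord (cidm i)) = CId.
Proof. by rewrite /cidm inordK // /decode eqxx. Qed.

Lemma ccomp_idl (i j : 'I_3) (f : hom3 i j) : ccomp (cidm j) f = f.
Proof.
rewrite ccompE dec_id gmulId encodeK ?ltM //.
by apply: val_inj; rewrite /= inordK // ltP1 ?ltM.
Qed.

Lemma ccomp_idr (i j : 'I_3) (f : hom3 i j) : ccomp f (cidm i) = f.
Proof.
rewrite ccompE dec_id /= encodeK ?ltM //.
by apply: val_inj; rewrite /= inordK // ltP1 ?ltM.
Qed.

Lemma main_nonempty : Cat_nonempty (mx3 z a b c n m p q r).
Proof.
exists (@Category 3 hom3 cidm ccomp ccomp_assoc ccomp_idl ccomp_idr) => i j /=.
rewrite card_ord prednK ?Mf_gt0 // mxE.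
by case: i => [[|[|[|i]]] Hi] //; case: j => [[|[|[|j]]] Hj].
Qed.

End Constr.

Theorem mainTheorem5 (z a b c n m p q r : nat) :
  0 < z -> 0 < a -> 0 < b -> 0 < c -> 0 < n -> 0 < m -> 0 < p -> 0 < q -> 0 < r ->
  1 <= z -> a * c < n -> b * p < r -> b * c <= m -> a * p <= q ->
  Cat_nonempty (mx3 z a b c n m p q r).
Proof.
move=> hz ha hb hc hn0 hm0 hp hq0 hr0 _ hn hr hm hq.
exact: main_nonempty.
Qed.
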